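(* For any graph $G$ and any unit flow $F$ in $G$, there is an integral unit flow $F^*$ with $F^*[u,v]=F[u,v]$ for all $u,v\in V(G)$ and $\mathsf{inter}(F^* )\le\mathsf{inter}(F)$. Consequently, for every graph $G$ and every unit-weighted graph $H$, $$\mathsf{inter}^*_G(H)=\mathsf{inter}_G(H)\le\mathsf{con}_G(H).$$
   Context: Let $G=(V,E)$; $\mathcal P_{uv}$ is the set of paths in $G$ between $u$ and $v$, $\mathcal P=\bigcup\mathcal P_{uv}$. A flow is $F:\mathcal P\to[0,\infty)$, $F[u,v]=\sum_{p\in\mathcal P_{uv}}F(p)$. $F$ is integral if for each $u,v$ it is supported on at most one path of $\mathcal P_{uv}$, and a unit flow if $F[u,v]\in\{0,1\}$ for all $u,v$. Congestion: $\mathsf{con}(F)=\sum_{v}C_F(v)^2$, $C_F(v)=\sum_{p\ni v}F(p)$. Intersection number: $\mathsf{inter}(F)=\sum_{(u,v,u',v'):|\{u,v,u',v'\}|=4}\sum_{p\in\mathcal P_{uv},p'\in\mathcal P_{u'v'}}\sum_{x\in p\cap p'}F(p)F(p')$. For an edge-weighted graph $H$ with weights $w$, a flow $F$ in $G$ is an $H$-flow if there is an injective $\phi:V(H)\to V$ with $F[\phi(u),\phi(v)]\ge w(u,v)$ for every edge $\{u,v\}$ of $H$; unit-weighted means $w\equiv1$. Then $\mathsf{con}_G(H)=\min\mathsf{con}(F)$ and $\mathsf{inter}_G(H)=\min\mathsf{inter}(F)$ over $H$-flows $F$ in $G$, and $\mathsf{inter}^*_G(H)=\min\mathsf{inter}(F)$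 over integral $H$-flows $F$ in $G$. *)

(* Defs.v *)
From HB Require Import structures.
From mathcomp Require Import all_boot all_order all_algebra.
From mathcomp Require Import all_classical all_reals ereal.
Set Implicit Arguments. Unset Strict Implicit. Unset Printing Implicit Defensive.
Import Order.TTheory GRing.Theory Num.Theory.
Local Open Scope ring_scope.
Local Open Scope classical_set_scope.

Section Flows.
Variables (R : realType) (V : finType) (e : rel V).

Fixpoint seqs_upto (k : nat) : seq (seq V) :=
  if k is k'.+1 then [::] :: [seq x :: s | x <- enum V, s <- seqs_upto k']
  else [:: [::]].

Definition is_gpath (p : seq V) : bool :=
  if p is x :: q then path e x q && uniq p else false.

(* the (finite) set P of all paths of G; every simple path has at most #|V|
   vertices, so it occurs in seqs_upto #|V| *)
Definition gpaths : seq (seq V) := [seq p <- undup (seqs_upto #|V|) | is_gpath p].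

Definition paths_uv (u v : V) : seq (seq V) :=
  [seq p <- gpaths | (head u p == u) && (last u p == v)].

(* a flow F : P -> [0, oo) (values outside P are irrelevant) *)
Definition is_flow (F : seq V -> R) : Prop :=
  forall p, is_gpath p -> 0 <= F p.

Definition fval (F : seq V -> R) (u v : V) : R := \sum_(p <- paths_uv u v) F p.

Definition is_integral (F : seq V -> R) : Prop :=
  forall u v p1 p2, p1 \in paths_uv u v -> p2 \in paths_uv u v ->
    F p1 != 0 -> F p2 != 0 -> p1 = p2.

Definition is_unit_flow (F : seq V -> R) : Prop :=
  forall u v, fval F u v = 0 \/ fval F u v = 1.

Definition cong_at (F : seq V -> R) (x : V) : R :=
  \sum_(p <- gpaths | x \in p) F p.

Definition con (F : seq V -> R) : R := \sum_(x : V) cong_at F x ^+ 2.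

Definition inter (F : seq V -> R) : R :=
  \sum_(u : V) \sum_(v : V) \sum_(u' : V) \sum_(v' : V)
    if #|[set u; v; u'; v']| == 4%N then
      \sum_(p <- paths_uv u v) \sum_(p' <- paths_uv u' v')
        \sum_(x : V | (x \in p) && (x \in p')) F p * F p'
    else 0.

Definition is_Hflow (W : finType) (eH : rel W) (F : seq V -> R) : Prop :=
  is_flow F /\ exists phi : W -> V, injective phi /\
    forall a b, eH a b -> 1 <= fval F (phi a) (phi b).

(* con_G(H), inter_G(H), inter*_G(H) : minima over (integral) H-flows,
   rendered as extended-real infima (+oo if there is no H-flow) *)
Definition conG (W : finType) (eH : rel W) : \bar R :=
  ereal_inf [set (con F)%:E | F in [set F | is_Hflow eH F]].

Definition interG (W : finType) (eH : rel W) : \bar R :=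
  ereal_inf [set (inter F)%:E | F in [set F | is_Hflow eH F]].

Definition interStarG (W : finType) (eH : rel W) : \bar R :=
  ereal_inf [set (inter F)%:E | F in [set F | is_Hflow eH F /\ is_integral F]].

End Flows.

(* Main.v *)
Require Import Defs.
From HB Require Import structures.
From mathcomp Require Import all_boot all_order all_algebra.
From mathcomp Require Import all_classical all_reals ereal.
Import Order.TTheory GRing.Theory Num.Theory.
Local Open Scope ring_scope.

Section Help.
Variables (R : realType) (V : finType) (e : rel V).

Lemma mem_gpaths p : p \in gpaths e -> is_gpath e p.
Proof. by rewrite mem_filter => /andP[]. Qed.

Arguments mem_gpaths {p}.

Lemma uniq_gpaths : uniq (gpaths e).
Proof. by rewrite filter_uniq // undup_uniq. Qed.

Lemma mem_paths_uv u v p : p \in paths_uv e u v =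
  [&& p \in gpaths e, head u p == u & last u p == v].
Proof. by rewrite mem_filter andbC. Qed.

Lemma uniq_paths_uv u v : uniq (paths_uv e u v).
Proof. exact: filter_uniq uniq_gpaths. Qed.

Lemma paths_uv_gpaths u v p : p \in paths_uv e u v -> p \in gpaths e.
Proof. by rewrite mem_paths_uv => /and3P[]. Qed.

Lemma paths_uv_ends u v p : p \in paths_uv e u v ->
  exists x q, [/\ p = x :: q, x = u & last x q = v].
Proof.
rewrite mem_paths_uv => /and3P[/mem_gpaths]; case: p => [//|x q] _ /= /eqP hx /eqP hl.
by exists x, q; rewrite -hx.
Qed.

Lemma blocks_disj u v u' v' p : p \in paths_uv e u v -> p \in paths_uv e u' v' ->
  u = u' /\ v = v'.
Proof.
move=> /paths_uv_ends [x [q [-> <- <-]]] /paths_uv_ends [x' [q' [[<- <-] <- <-]]].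
by [].
Qed.

Arguments blocks_disj {u v u' v' p}.

Definition D4 (p p' : seq V) : bool :=
  match p, p' with
  | x :: q, y :: r => #|[set x; last x q; y; last y r]%classic| == 4%N
  | _, _ => false end.

Lemma D4_uv u v u' v' p p' : p \in paths_uv e u v -> p' \in paths_uv e u' v' ->
  D4 p p' = (#|[set u; v; u'; v']%classic| == 4%N).
Proof.
move=> /paths_uv_ends [x [q [-> <- <-]]] /paths_uv_ends [x' [q' [-> <- <-]]].
by [].
Qed.

Lemma card_aabb (a b : V) : #|[set a; b; a; b]%classic| != 4%N.
Proof.
have E : [set a; b; a; b]%classic =i [set a; b].
  by move=> x; rewrite !in_setU !in_set1 !inE; case: (x == a); case: (x == b).
rewrite (eq_card E) cards2.
by case: (a != b).
Qed.

Lemma part_sum (g : seq V -> R) :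
  \sum_(u : V) \sum_(v : V) \sum_(p <- paths_uv e u v) g p = \sum_(p <- gpaths e) g p.
Proof.
transitivity (\sum_(u : V) \sum_(v : V) \sum_(p <- gpaths e)
   if (head u p == u) && (last u p == v) then g p else 0).
  by apply: eq_bigr => u _; apply: eq_bigr => v _; rewrite big_filter big_mkcond.
under eq_bigr do rewrite exchange_big.
rewrite exchange_big /= big_seq [RHS]big_seq; apply: eq_bigr => p /mem_gpaths.
case: p => [//|x q] _ /=.
rewrite (bigD1 x) //= [X in _ + X]big1 ?addr0; last first.
  by move=> u /= /negbTE hu; apply: big1 => v _; rewrite eq_sym hu.
rewrite eqxx /= (bigD1 (last x q)) //= eqxx big1 ?addr0 // => v /= /negbTE hv.
by rewrite eq_sym hv.
Qed.

Lemma rearr (H : seq V -> seq V -> R) :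
  \sum_(u : V) \sum_(v : V) \sum_(u' : V) \sum_(v' : V)
   \sum_(p <- paths_uv e u v) \sum_(p' <- paths_uv e u' v') H p p'
  = \sum_(p <- gpaths e) \sum_(p' <- gpaths e) H p p'.
Proof.
rewrite -part_sum; apply: eq_bigr => u _; apply: eq_bigr => v _.
under [RHS]eq_bigr do rewrite -part_sum.
symmetry; rewrite exchange_big; apply: eq_bigr => u' _.
by rewrite exchange_big.
Qed.

Lemma inter_alt (F : seq V -> R) : inter e F =
  \sum_(p <- gpaths e) \sum_(p' <- gpaths e)
    (if D4 p p' then \sum_(x : V | (x \in p) && (x \in p')) F p * F p' else 0).
Proof.
rewrite /inter -rearr.
apply: eq_bigr => u _; apply: eq_bigr => v _; apply: eq_bigr => u' _; apply: eq_bigr => v' _.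
case: ifP => h.
- rewrite big_seq [RHS]big_seq; apply: eq_bigr => p hp.
  rewrite big_seq [RHS]big_seq; apply: eq_bigr => p' hp'.
  by rewrite (D4_uv _ _ _ _ _ _ hp hp') h.
- symmetry; rewrite big_seq big1 // => p hp; rewrite big_seq big1 // => p' hp'.
  by rewrite (D4_uv _ _ _ _ _ _ hp hp') h.
Qed.


Definition Fq (F : seq V -> R) (B : seq (seq V)) (q : seq V) : seq V -> R :=
  fun p => if p \in B then (p == q)%:R else F p.

Lemma key (F : seq V -> R) (B : seq (seq V)) p p' :
  uniq B -> \sum_(q <- B) F q = 1 -> ~~ ((p \in B) && (p' \in B)) ->
  \sum_(q <- B) F q * (Fq F B q p * Fq F B q p') = F p * F p'.
Proof.
move=> uB s1; rewrite /Fq.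
case: (boolP (p \in B)) => hp; case: (boolP (p' \in B)) => hp' //= _.
- rewrite (bigD1_seq p) //= eqxx mul1r big1 ?addr0 // => q hq.
  by rewrite eq_sym (negbTE hq) mul0r mulr0.
- rewrite (bigD1_seq p') //= eqxx mulr1 big1 ?addr0; first by rewrite mulrC.
  by move=> q hq; rewrite eq_sym (negbTE hq) mulr0 mulr0.
- by rewrite -big_distrl /= s1 mul1r.
Qed.

Lemma inter_decomp (F : seq V -> R) u0 v0 :
  fval e F u0 v0 = 1 ->
  inter e F = \sum_(q <- paths_uv e u0 v0) F q * inter e (Fq F (paths_uv e u0 v0) q).
Proof.
move=> h1; set B := paths_uv e u0 v0.
rewrite inter_alt.
transitivity (\sum_(q <- B) \sum_(p <- gpaths e) \sum_(p' <- gpaths e) F q *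
  (if D4 p p' then \sum_(x : V | (x \in p) && (x \in p')) Fq F B q p * Fq F B q p' else 0));
  last first.
  by apply: eq_bigr => q _; rewrite inter_alt big_distrr; apply: eq_bigr => p _; rewrite big_distrr.
symmetry; rewrite exchange_big; apply: eq_bigr => p _.
rewrite exchange_big; apply: eq_bigr => p' _.
case: ifP => hD; last by apply: big1 => q _; rewrite mulr0.
under eq_bigr do rewrite big_distrr /=.
rewrite exchange_big /=; apply: eq_bigr => x _.
apply: key; first exact: uniq_paths_uv.
  exact: h1.
apply/negP => /andP[hp hp'].
by move: hD; rewrite (D4_uv _ _ _ _ _ _ hp hp') (negbTE (card_aabb _ _)).
Qed.


Lemma seq_argmin (T : eqType) (s : seq T) (f : T -> R) : s != [::] ->
  exists2 q, q \in s & forall q', q' \in s -> f q <= f q'.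
Proof.
elim: s => [//|x s IH] _.
case: s IH => [|y s] IH.
  by exists x => [|q']; rewrite ?inE // => /eqP->.
have [q0 hq0 hmin] := IH isT.
have [hle|hlt] := leP (f x) (f q0).
- exists x; first by rewrite inE eqxx.
  move=> q'; rewrite inE => /predU1P[->//|hq']; exact: le_trans hle (hmin _ hq').
- exists q0; first by rewrite inE hq0 orbT.
  move=> q'; rewrite inE => /predU1P[->|hq']; [exact: ltW | exact: hmin].
Qed.

Definition IntAt (F : seq V -> R) u v := forall p1 p2,
  p1 \in paths_uv e u v -> p2 \in paths_uv e u v -> F p1 != 0 -> F p2 != 0 -> p1 = p2.

Lemma notin_other u v u0 v0 p : p \in paths_uv e u v -> ~~ ((u == u0) && (v == v0)) ->
  p \notin paths_uv e u0 v0.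
Proof.
move=> hp hne; apply/negP => hp0; have [hu hv] := blocks_disj hp hp0.
by rewrite hu hv !eqxx in hne.
Qed.

Arguments notin_other {u v u0 v0 p}.

Lemma step (F : seq V -> R) : is_flow e F -> is_unit_flow e F -> forall u0 v0,
  exists G, [/\ is_flow e G, (forall u v, fval e G u v = fval e F u v),
    IntAt G u0 v0, (forall p, p \notin paths_uv e u0 v0 -> G p = F p) & inter e G <= inter e F].
Proof.
move=> hF hU u0 v0; set B := paths_uv e u0 v0.
have Fge0 : forall p, p \in B -> 0 <= F p.
  by move=> p /paths_uv_gpaths /mem_gpaths; apply: hF.
case: (hU u0 v0) => h.
- exists F; split => // p1 p2 hp1 _ hF1 _; exfalso.
  move: h => /eqP; rewrite /fval big_seq psumr_eq0; last by move=> i; apply: Fge0.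
  by move/seq.allP => /(_ p1 hp1); rewrite hp1 /= (negbTE hF1).
- have Bne : B != [::].
    by apply/eqP => E; move: h; rewrite /fval -/B E big_nil => /eqP; rewrite eq_sym oner_eq0.
  have [q hq hmin] := seq_argmin _ _ (fun q => inter e (Fq F B q)) Bne.
  exists (Fq F B q); split.
  + move=> p hp; rewrite /Fq; case: ifP => _; [exact: ler0n | exact: hF].
  + move=> u v; case: (boolP ((u == u0) && (v == v0))) => [/andP[/eqP-> /eqP->]|huv].
      rewrite h /fval -/B /Fq big_seq (eq_bigr (fun p => (p == q)%:R)); last by move=> p ->.
      rewrite -big_seq (bigD1_seq q) //= ?uniq_paths_uv // eqxx big1 ?addr0 // => p hp.
      by rewrite (negbTE hp).
    rewrite /fval big_seq [RHS]big_seq; apply: eq_bigr => p hp.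
    by rewrite /Fq (negbTE (notin_other hp huv)).
  + move=> p1 p2 hp1 hp2; rewrite /Fq -/B hp1 hp2.
    move=> h1' h2'; have /eqP-> : p1 == q by move: h1'; case: (p1 == q); rewrite //= mulr0n eqxx.
    by have /eqP-> : p2 == q by move: h2'; case: (p2 == q); rewrite //= mulr0n eqxx.
  + by move=> p hp; rewrite /Fq (negbTE hp).
  + rewrite (inter_decomp _ _ _ h) -/B.
    apply: le_trans (_ : \sum_(q' <- B) F q' * inter e (Fq F B q) <= _).
      by rewrite -big_distrl /= -[\sum_(_ <- _) _]/(fval e F u0 v0) h mul1r.
    rewrite big_seq [X in _ <= X]big_seq; apply: ler_sum => q' hq'.
    by apply: ler_wpM2l; [exact: Fge0 | exact: hmin].
Qed.

Lemma iter_int (F : seq V -> R) : is_flow e F -> is_unit_flow e F -> forall s : seq (V * V),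
  exists G, [/\ is_flow e G, (forall u v, fval e G u v = fval e F u v),
     (forall uv, uv \in s -> IntAt G uv.1 uv.2) & inter e G <= inter e F].
Proof.
move=> hF hU; elim => [|[u0 v0] s IH].
  by exists F; split.
have [G [hG hGf hGi hGint]] := IH.
have hGU : is_unit_flow e G by move=> u v; rewrite hGf; apply: hU.
have [G' [hG' hG'f hG'i hag hint]] := step _ hG hGU u0 v0.
exists G'; split => //.
- by move=> u v; rewrite hG'f hGf.
- move=> [u v]; rewrite inE => /predU1P[[-> ->] //|huv] /=.
  case: (boolP ((u == u0) && (v == v0))) => [/andP[/eqP-> /eqP->] //|hne].
  move=> p1 p2 h1 h2; rewrite !hag; [exact: (hGi _ huv)| ..].
  + exact: notin_other h2 hne.
  + exact: notin_other h1 hne.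
- exact: le_trans hint hGint.
Qed.

Lemma part1 (F : seq V -> R) : is_flow e F -> is_unit_flow e F ->
     exists Fs : seq V -> R,
       [/\ is_flow e Fs, is_integral e Fs, is_unit_flow e Fs,
           (forall u v, fval e Fs u v = fval e F u v)
         & inter e Fs <= inter e F].
Proof.
move=> hF hU.
have [G [hG hGf hGi hGint]] := iter_int _ hF hU [seq (u, v) | u <- enum V, v <- enum V].
exists G; split => //.
- move=> u v; apply: (hGi (u, v)).
  by apply: allpairs_f; rewrite mem_enum.
- by move=> u v; rewrite hGf; apply: hU.
Qed.


Lemma inter_mono (G F : seq V -> R) :
  (forall p, is_gpath e p -> 0 <= G p /\ G p <= F p) -> inter e G <= inter e F.
Proof.
move=> h; rewrite !inter_alt big_seq [X in _ <= X]big_seq; apply: ler_sum => p hp.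
rewrite big_seq [X in _ <= X]big_seq; apply: ler_sum => p' hp'.
case: ifP => _ //; apply: ler_sum => x _.
have [h1 h2] := h p (mem_gpaths hp); have [h1' h2'] := h p' (mem_gpaths hp').
by apply: ler_pM.
Qed.

Lemma inter_le_con (F : seq V -> R) : is_flow e F -> inter e F <= con e F.
Proof.
move=> hF; rewrite inter_alt.
apply: le_trans (_ : _ <= \sum_(p <- gpaths e) \sum_(p' <- gpaths e)
    \sum_(x : V | (x \in p) && (x \in p')) F p * F p') _.
  rewrite big_seq [X in _ <= X]big_seq; apply: ler_sum => p hp.
  rewrite big_seq [X in _ <= X]big_seq; apply: ler_sum => p' hp'.
  case: ifP => _ //; apply: sumr_ge0 => x _; apply: mulr_ge0; apply: hF; exact: mem_gpaths.
rewrite le_eqVlt; apply/orP; left; apply/eqP.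
rewrite /con /cong_at.
transitivity (\sum_(x : V) \sum_(p <- gpaths e) \sum_(p' <- gpaths e)
   if (x \in p) && (x \in p') then F p * F p' else 0).
  symmetry; rewrite exchange_big; apply: eq_bigr => p _.
  rewrite exchange_big; apply: eq_bigr => p' _.
  by rewrite [RHS]big_mkcond.
apply: eq_bigr => x _; rewrite expr2 big_distrl [RHS]big_mkcond; apply: eq_bigr => p _ /=.
case: (boolP (x \in p)) => hx /=.
  by rewrite big_distrr [RHS]big_mkcond.
by apply: big1.
Qed.

End Help.

Theorem lemma3p3 (R : realType) (V : finType) (e : rel V)
  (e_sym : symmetric e) (e_irr : irreflexive e) :
  (forall F : seq V -> R, is_flow e F -> is_unit_flow e F ->
     exists Fs : seq V -> R,
       [/\ is_flow e Fs, is_integral e Fs, is_unit_flow e Fs,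
           (forall u v, fval e Fs u v = fval e F u v)
         & inter e Fs <= inter e F])
  /\
  (forall (W : finType) (eH : rel W), symmetric eH -> irreflexive eH ->
     interStarG R e eH = interG R e eH /\ (interG R e eH <= conG R e eH)%E).
Proof.
split; first by move=> F; apply: part1.
move=> W eH _ _.
have red : forall F : seq V -> R, is_Hflow e eH F -> exists Fs,
    [/\ is_Hflow e eH Fs, is_integral e Fs & inter e Fs <= inter e F].
  move=> F [hF [phi [iphi hphi]]].
  pose D u v := [exists ab : W * W, eH ab.1 ab.2 && (phi ab.1 == u) && (phi ab.2 == v)].
  pose F' := fun p : seq V => if p is x :: q then
     (if D x (last x q) then F p / fval e F x (last x q) else 0) else 0.
  have hD : forall u v, D u v -> 1 <= fval e F u v.
    move=> u v /existsP [[a b] /= /andP[/andP[hab /eqP <-] /eqP <-]]; exact: hphi.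
  have F'uv : forall u v p, p \in paths_uv e u v ->
      F' p = if D u v then F p / fval e F u v else 0.
    by move=> u v p /paths_uv_ends [x [q [-> <- <-]]].
  have fF' : forall u v, fval e F' u v = if D u v then 1 else 0.
    move=> u v; rewrite /fval big_seq (eq_bigr _ (fun p hp => F'uv u v p hp)) -big_seq.
    case: ifP => hd; last by rewrite big1.
    have fpos : 0 < fval e F u v := lt_le_trans ltr01 (hD _ _ hd).
    by rewrite -big_distrl /= -/(fval e F u v) divff // gt_eqF.
  have hF' : is_flow e F'.
    case=> [//|x q] hp /=; case: ifP => hd //.
    by apply: divr_ge0; [exact: hF | exact: le_trans ler01 (hD _ _ hd)].
  have hU' : is_unit_flow e F' by move=> u v; rewrite fF'; case: ifP; [right | left].
  have [Fs [hFs hiFs hUs hfs hint]] := part1 _ _ _ _ hF' hU'.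
  exists Fs; split => //.
    split => //; exists phi; split => // a b hab.
    rewrite hfs fF'; case: ifP => // /negbT /existsP []; exists (a, b).
    by rewrite /= hab !eqxx.
  apply: le_trans hint _; apply: inter_mono => p hp; split; first exact: hF'.
  case: p hp => [//|x q] hp /=; case: ifP => hd; last exact: hF.
  have fpos : 0 < fval e F x (last x q) := lt_le_trans ltr01 (hD _ _ hd).
  by rewrite ler_pdivrMr // ler_peMr //; [exact: hF | exact: hD].
split.
- apply/eqP; rewrite eq_le; apply/andP; split.
  + apply: le_ereal_inf_tmp => _ [F hF <-].
    have [Fs [hFs hi hle]] := red F hF.
    apply: ge_ereal_inf; exists (inter e Fs)%:E; first by exists Fs.
    by rewrite lee_fin.
  + by apply: ereal_inf_le_tmp => _ [F [hF _] <-]; exists F.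
- apply: le_ereal_inf_tmp => _ [F hF <-].
  apply: ge_ereal_inf; exists (inter e F)%:E; first by exists F.
  by rewrite lee_fin; apply: inter_le_con; case: hF.
Qed.
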